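(* Let $f\colon S\to S$ be a dynamical system. The subsystem preorder of $f$ is a meet-semilattice: for any two subsystems $(f_1,p_1)$ and $(f_2,p_2)$ of $f$, with $f_i\colon S_i\to S_i$, there is a subsystem $(f_3,p_3)$ of $f$ with $f_3\colon S_3\to S_3$ (possibly trivial) such that $(f_3,p_3)\le(f_1,p_1)$ and $(f_3,p_3)\le(f_2,p_2)$, and such that whenever $(f_4,p_4)$ is a subsystem of $f$ with $(f_4,p_4)\le (f_1,p_1)$ and $(f_4,p_4)\le(f_2,p_2)$, then $(f_4,p_4)\le(f_3,p_3)$.
   Context: A dynamical system is a continuous bijection $f\colon S\to S$ of a topological space $S$. A subsystem of $f$ is a pair $(g,p)$ consisting of a dynamical system $g\colon B\to B$ and a surjection $p\colon S\to B$ (the subsystem projection) with $p\circ f=g\circ p$. The subsystem preorder on subsystems of $f$ is defined by $(g_1,p_1)\le(g_2,p_2)$ (with $p_i\colon S\to B_i$) iff there is a map $p_{1,2}\colon B_2\to B_1$ with $p_1=p_{1,2}\circ p_2$; then $g_1$ is a subsystem of $g_2$ via $p_{1,2}$. *)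

(* Defs.v *)
From mathcomp Require Import all_boot.
From mathcomp Require Import boolp classical_sets topology.

Set Implicit Arguments.
Unset Strict Implicit.
Unset Printing Implicit Defensive.

Definition dynsys (S : topologicalType) (f : S -> S) : Prop :=
  continuous f /\ bijective f.

Definition subsystem (S B : topologicalType) (f : S -> S) (g : B -> B)
    (p : S -> B) : Prop :=
  dynsys g /\ continuous p /\ (forall b : B, exists s : S, p s = b) /\
  p \o f = g \o p.

Definition subsys_le (S B1 B2 : topologicalType) (p1 : S -> B1)
    (p2 : S -> B2) : Prop :=
  exists p12 : B2 -> B1, continuous p12 /\ p1 = p12 \o p2.

(* Main.v *)
Require Import Defs.
From HB Require Import structures.
From mathcomp Require Import all_boot.
From mathcomp Require Import boolp classical_sets topology.

Set Implicit Arguments.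
Unset Strict Implicit.
Unset Printing Implicit Defensive.
Local Open Scope classical_set_scope.

Definition Rel (S S1 S2 : Type) (p1 : S -> S1) (p2 : S -> S2) (s t : S) : Prop :=
  forall Q : S -> S -> Prop,
    (forall x, Q x x) -> (forall x y, Q x y -> Q y x) ->
    (forall x y z, Q x y -> Q y z -> Q x z) ->
    (forall x y, p1 x = p1 y \/ p2 x = p2 y -> Q x y) -> Q s t.

Section Quot.
Context (S S1 S2 : Type) (p1 : S -> S1) (p2 : S -> S2).
Local Notation R := (Rel p1 p2).

Lemma R_refl x : R x x. Proof. by rewrite /Rel => Q r _ _ _. Qed.
Lemma R_sym x y : R x y -> R y x.
Proof. rewrite /Rel => h Q r sy t b; exact: (sy _ _ (h Q r sy t b)). Qed.
Lemma R_trans x y z : R x y -> R y z -> R x z.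
Proof. rewrite /Rel => h1 h2 Q r sy t b; exact: (t _ y _ (h1 Q r sy t b) (h2 Q r sy t b)). Qed.
Lemma R_base x y : p1 x = p1 y \/ p2 x = p2 y -> R x y.
Proof. by rewrite /Rel => h Q r sy t b; apply: b. Qed.
Lemma R_ind (Q : S -> S -> Prop) :
    (forall x, Q x x) -> (forall x y, Q x y -> Q y x) ->
    (forall x y z, Q x y -> Q y z -> Q x z) ->
    (forall x y, p1 x = p1 y \/ p2 x = p2 y -> Q x y) ->
    forall s t, R s t -> Q s t.
Proof. rewrite /Rel => r sy t b x y h; exact: (h Q r sy t b). Qed.
End Quot.

Definition T3 (S S1 S2 : Type) (p1 : S -> S1) (p2 : S -> S2)
  (h1 : forall b, exists s, p1 s = b) (h2 : forall b, exists s, p2 s = b) :=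
  {A : S -> Prop | exists s, A = Rel p1 p2 s}.

Section Q2.
Context (S S1 S2 : Type) (p1 : S -> S1) (p2 : S -> S2)
  (h1 : forall b, exists s, p1 s = b) (h2 : forall b, exists s, p2 s = b).
Local Notation R := (Rel p1 p2).
Local Notation T := (T3 h1 h2).

Definition cls (s : S) : T := exist _ (R s) (ex_intro _ s erefl).
Definition rep (x : T) : S := projT1 (cid (proj2_sig x)).

Lemma clsP s t : cls s = cls t <-> R s t.
Proof.
split.
  move=> /(congr1 (@proj1_sig _ _)) /= e.
  have : R t t by apply: R_refl.
  by rewrite -e.
move=> st; apply: eq_exist; apply: funext => u; apply: propext; split.
  by move=> su; apply: R_trans (R_sym st) su.
by move=> tu; apply: R_trans st tu.
Qed.

Lemma cls_rep x : cls (rep x) = x.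
Proof.
rewrite /rep; case: (cid _) => r e /=.
case: x e => A HA /= e; subst A; exact: eq_exist.
Qed.

Definition q1 (b : S1) : T := cls (projT1 (cid (h1 b))).
Definition q2 (b : S2) : T := cls (projT1 (cid (h2 b))).

Lemma q1E s : q1 (p1 s) = cls s.
Proof.
rewrite /q1; case: (cid _) => r e /=; apply/clsP; apply: R_base; by left.
Qed.
Lemma q2E s : q2 (p2 s) = cls s.
Proof.
rewrite /q2; case: (cid _) => r e /=; apply/clsP; apply: R_base; by right.
Qed.
End Q2.

HB.instance Definition _ S S1 S2 p1 p2 h1 h2 :=
  gen_eqMixin (@T3 S S1 S2 p1 p2 h1 h2).
HB.instance Definition _ S S1 S2 p1 p2 h1 h2 :=
  gen_choiceMixin (@T3 S S1 S2 p1 p2 h1 h2).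

Section Top.
Context (S : Type) (S1 S2 : topologicalType) (p1 : S -> S1) (p2 : S -> S2)
  (h1 : forall b, exists s, p1 s = b) (h2 : forall b, exists s, p2 s = b).
Local Notation T := (T3 h1 h2).

Definition op3 (U : set T) : Prop :=
  open (q1 h1 h2 @^-1` U) /\ open (q2 h1 h2 @^-1` U).

Lemma op3T : op3 setT.
Proof. by split; exact: openT. Qed.
Lemma op3I : setI_closed op3.
Proof. by move=> A B [a1 a2] [b1 b2]; split; apply: openI. Qed.
Lemma op3U (I : Type) (f : I -> set T) : (forall i, op3 (f i)) ->
  op3 (\bigcup_i f i).
Proof.
move=> h; split.
  have -> : q1 h1 h2 @^-1` (\bigcup_i f i) = \bigcup_i (q1 h1 h2 @^-1` f i).
    by apply: funext => x; apply: propext; split.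
  by apply: bigcup_open => i _; case: (h i).
have -> : q2 h1 h2 @^-1` (\bigcup_i f i) = \bigcup_i (q2 h1 h2 @^-1` f i).
  by apply: funext => x; apply: propext; split.
by apply: bigcup_open => i _; case: (h i).
Qed.
End Top.

HB.instance Definition _ (S : Type) (S1 S2 : topologicalType) p1 p2 h1 h2 :=
  isOpenTopological.Build (@T3 S S1 S2 p1 p2 h1 h2)
    (@op3T S S1 S2 p1 p2 h1 h2) (@op3I S S1 S2 p1 p2 h1 h2)
    (@op3U S S1 S2 p1 p2 h1 h2).


Section Main.
Context (S S1 S2 : topologicalType) (p1 : S -> S1) (p2 : S -> S2)
  (h1 : forall b, exists s, p1 s = b) (h2 : forall b, exists s, p2 s = b).
Local Notation T := (T3 h1 h2).
Local Notation R := (Rel p1 p2).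
Local Notation cls := (@cls S S1 S2 p1 p2 h1 h2).

Lemma open3 (U : set T) : open U <-> op3 U.
Proof. by []. Qed.

Lemma cont3 (Y : topologicalType) (g : T -> Y) :
  continuous (g \o q1 h1 h2) -> continuous (g \o q2 h1 h2) -> continuous g.
Proof.
move=> /continuousP c1 /continuousP c2; apply/continuousP => A oA.
by apply/open3; split; [exact: c1|exact: c2].
Qed.

Lemma cont_cls : continuous p1 -> continuous cls.
Proof.
move=> /continuousP c1; apply/continuousP => A /open3 [oA _].
have -> : cls @^-1` A = p1 @^-1` (q1 h1 h2 @^-1` A).
  by apply: funext => s; rewrite /preimage /= q1E.
exact: c1.
Qed.

Lemma cont_q1 : continuous (q1 h1 h2).
Proof. by apply/continuousP => A /open3 []. Qed.
Lemma cont_q2 : continuous (q2 h1 h2).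
Proof. by apply/continuousP => A /open3 []. Qed.

Lemma lift_cls (Y : Type) (g : S -> Y) :
  (forall s t, R s t -> g s = g t) ->
  forall s, g (rep (cls s)) = g s.
Proof.
move=> hg s; apply: hg; apply/clsP; by rewrite cls_rep.
Qed.

End Main.

Theorem lemma6 (S : topologicalType) (f : S -> S) (hf : dynsys f)
    (S1 S2 : topologicalType) (f1 : S1 -> S1) (p1 : S -> S1)
    (f2 : S2 -> S2) (p2 : S -> S2)
    (h1 : subsystem f f1 p1) (h2 : subsystem f f2 p2) :
  exists (S3 : topologicalType) (f3 : S3 -> S3) (p3 : S -> S3),
    [/\ subsystem f f3 p3, subsys_le p3 p1, subsys_le p3 p2 &
      forall (S4 : topologicalType) (f4 : S4 -> S4) (p4 : S -> S4),
        subsystem f f4 p4 -> subsys_le p4 p1 -> subsys_le p4 p2 ->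
        subsys_le p4 p3].
Proof.
case: hf => fc [g fg gf].
case: h1 => [[f1c [g1 f1g g1f]] [p1c [s1 e1]]].
case: h2 => [[f2c [g2 f2g g2f]] [p2c [s2 e2]]].
pose T := T3 s1 s2.
pose c := @cls S S1 S2 p1 p2 s1 s2.
have Rf : forall s t, Rel p1 p2 s t -> Rel p1 p2 (f s) (f t).
  apply: R_ind.
  - by move=> x; apply: R_refl.
  - by move=> x y; apply: R_sym.
  - by move=> x y z; apply: R_trans.
  move=> x y [h|h]; apply: R_base; [left|right].
    by have := congr1 (fun h => h x) e1; have := congr1 (fun h => h y) e1;
      rewrite /= h => <- <-.
  by have := congr1 (fun h => h x) e2; have := congr1 (fun h => h y) e2;
    rewrite /= h => <- <-.
have Rg : forall s t, Rel p1 p2 s t -> Rel p1 p2 (g s) (g t).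
  apply: R_ind.
  - by move=> x; apply: R_refl.
  - by move=> x y; apply: R_sym.
  - by move=> x y z; apply: R_trans.
  move=> x y [h|h]; apply: R_base; [left|right].
    apply: (can_inj f1g).
    have := congr1 (fun h => h (g x)) e1; have := congr1 (fun h => h (g y)) e1.
    by rewrite /= !gf h => <- <-.
  apply: (can_inj f2g).
  have := congr1 (fun h => h (g x)) e2; have := congr1 (fun h => h (g y)) e2.
  by rewrite /= !gf h => <- <-.
pose f3 : T -> T := fun x => c (f (@rep S S1 S2 p1 p2 s1 s2 x)).
pose g3 : T -> T := fun x => c (g (@rep S S1 S2 p1 p2 s1 s2 x)).
have crep : forall x : T, c (@rep S S1 S2 p1 p2 s1 s2 x) = x.
  exact: (@cls_rep S S1 S2 p1 p2 s1 s2).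
have f3E : forall s, f3 (c s) = c (f s).
  move=> s; apply/clsP; apply: Rf; apply/clsP; exact: crep.
have g3E : forall s, g3 (c s) = c (g s).
  move=> s; apply/clsP; apply: Rg; apply/clsP; exact: crep.
have allc : forall x : T, exists s, x = c s.
  by move=> x; exists (@rep S S1 S2 p1 p2 s1 s2 x); rewrite crep.
have q1c : forall s, q1 s1 s2 (p1 s) = c s by move=> s; exact: q1E.
have q2c : forall s, q2 s1 s2 (p2 s) = c s by move=> s; exact: q2E.
have q1any : forall b, exists s, b = p1 s /\ q1 s1 s2 b = c s.
  by move=> b; have [s <-] := s1 b; exists s; rewrite q1c.
have q2any : forall b, exists s, b = p2 s /\ q2 s1 s2 b = c s.
  by move=> b; have [s <-] := s2 b; exists s; rewrite q2c.
exists T, f3, c; split.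
- split; [split|split; [|split]].
  + apply: cont3.
      have -> : f3 \o q1 s1 s2 = q1 s1 s2 \o f1.
        apply: funext => b; have [s [-> _]] := q1any b.
        rewrite /= q1c f3E; have := congr1 (fun h => h s) e1.
        by rewrite /= => <-; rewrite q1c.
      by move=> x; apply: continuous_comp; [apply: f1c|apply: cont_q1].
    have -> : f3 \o q2 s1 s2 = q2 s1 s2 \o f2.
      apply: funext => b; have [s [-> _]] := q2any b.
      rewrite /= q2c f3E; have := congr1 (fun h => h s) e2.
      by rewrite /= => <-; rewrite q2c.
    by move=> x; apply: continuous_comp; [apply: f2c|apply: cont_q2].
  + exists g3 => x; have [s ->] := allc x.
      by rewrite f3E g3E fg.
    by rewrite g3E f3E gf.
  + exact: cont_cls.
  + by move=> x; have [s ->] := allc x; exists s.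
  + by apply: funext => s /=; rewrite f3E.
- exists (q1 s1 s2); split; first exact: cont_q1.
  by apply: funext => s /=; rewrite q1c.
- exists (q2 s1 s2); split; first exact: cont_q2.
  by apply: funext => s /=; rewrite q2c.
move=> S4 f4 p4 _ [r1 [r1c e41]] [r2 [r2c e42]].
have Rp : forall s t, Rel p1 p2 s t -> p4 s = p4 t.
  apply: R_ind.
  - by [].
  - by move=> x y ->.
  - by move=> x y z -> ->.
  move=> x y [h|h].
    by rewrite e41 /= h.
  by rewrite e42 /= h.
pose r : T -> S4 := fun x => p4 (@rep S S1 S2 p1 p2 s1 s2 x).
have rE : forall s, r (c s) = p4 s by move=> s; exact: lift_cls.
exists r; split; last by apply: funext => s /=; rewrite rE.
apply: cont3.
  have -> : r \o q1 s1 s2 = r1.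
    apply: funext => b; have [s [-> e]] := q1any b.
    by rewrite /= e rE e41.
  exact: r1c.
have -> : r \o q2 s1 s2 = r2.
  apply: funext => b; have [s [-> e]] := q2any b.
  by rewrite /= e rE e42.
exact: r2c.
Qed.
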